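(* Let $P$ and $Q$ be diassociative loops and let $f:P\to Q$ be a half-isomorphism. Then $f(C(P))=C(Q)$, where $C(L)=\{c\in L: cx=xc \text{ for all } x\in L\}$ denotes the commutant of a loop $L$.
   Context: A loop is diassociative if any two of its elements generate a group. For loops $(L,\ast)$ and $(L',\cdot)$, a bijection $f:L\to L'$ is a half-isomorphism if $f(x\ast y)\in\{f(x)\cdot f(y),\,f(y)\cdot f(x)\}$ for all $x,y\in L$. *)

(* Defs.v *)
From Stdlib Require Import ssreflect ssrfun.

Record loop := Loop {
  carrier :> Type;
  lop : carrier -> carrier -> carrier;
  lunit : carrier;
  lop_1x : forall x, lop lunit x = x;
  lop_x1 : forall x, lop x lunit = x;
  lop_ldiv : forall a b, exists! x, lop a x = b;
  lop_rdiv : forall a b, exists! y, lop y a = b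
}.

Arguments lop {l}.
Arguments lunit {l}.

Definition is_subloop (L : loop) (S : L -> Prop) : Prop :=
  S lunit /\
  (forall a b, S a -> S b -> S (lop a b)) /\
  (forall a b x, S a -> S b -> lop a x = b -> S x) /\
  (forall a b y, S a -> S b -> lop y a = b -> S y).

Definition gen2 (L : loop) (x y : L) : L -> Prop :=
  fun z => forall S : L -> Prop, is_subloop L S -> S x -> S y -> S z.

(* A loop is diassociative if any two elements generate a group, i.e. the
   subloop they generate is associative (an associative loop is a group). *)
Definition diassociative (L : loop) : Prop :=
  forall x y : L, forall a b c : L,
    gen2 L x y a -> gen2 L x y b -> gen2 L x y c ->
    lop (lop a b) c = lop a (lop b c).

Definition half_isomorphism (P Q : loop) (f : P -> Q) : Prop :=
  bijective f /\
  forall x y : P, f (lop x y) = lop (f x) (f y) \/ f (lop x y) = lop (f y) (f x).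

Definition commutant (L : loop) (c : L) : Prop :=
  forall x : L, lop c x = lop x c.

(* Main.v *)
Require Import Defs.
From Stdlib Require Import ssreflect ssrfun.

Section Aux.
Variable L : loop.

Lemma lcan (a u v : L) : lop a u = lop a v -> u = v.
Proof.
  move=> H. case: (lop_ldiv L a (lop a u)) => w [_ U].
  rewrite -(U u) // (U v) //.
Qed.

Lemma rcan (a u v : L) : lop u a = lop v a -> u = v.
Proof.
  move=> H. case: (lop_rdiv L a (lop u a)) => w [_ U].
  rewrite -(U u) // (U v) //.
Qed.

Lemma gen_x (x y : L) : gen2 L x y x. Proof. by move=> S _ Hx. Qed.
Lemma gen_y (x y : L) : gen2 L x y y. Proof. by move=> S _ _ Hy. Qed.
Lemma gen_1 (x y : L) : gen2 L x y lunit. Proof. by move=> S [H _]. Qed.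
Lemma gen_mul (x y u v : L) : gen2 L x y u -> gen2 L x y v -> gen2 L x y (lop u v).
Proof. move=> Hu Hv S HS Sx Sy. have HS' := HS. case: HS => [_ [H _]]. apply: H; [apply: Hu|apply: Hv]; auto. Qed.
Lemma gen_inv (x y u v : L) : gen2 L x y u -> lop u v = lunit -> gen2 L x y v.
Proof.
  move=> Hu E S HS Sx Sy. have HS' := HS. case: HS => [S1 [_ [H _]]].
  apply: (H u lunit v) => //. by apply: Hu.
Qed.

Lemma inv_sym (D : diassociative L) (u v : L) : lop u v = lunit -> lop v u = lunit.
Proof.
  move=> E. apply: (rcan v). rewrite lop_1x.
  have Gv : gen2 L u v v by apply: gen_y.
  rewrite (D u v v u v Gv (gen_x u v) Gv) E lop_x1 //.
Qed.
End Aux.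

#[local] Hint Resolve gen_x gen_y gen_1 gen_mul : gen.

Theorem lemma2p4 (P Q : loop) (f : P -> Q) :
  diassociative P -> diassociative Q -> half_isomorphism P Q f ->
  forall y : Q, commutant Q y <-> exists x : P, commutant P x /\ f x = y.
Proof.
  move=> DP DQ [[g fg gf] Hf].
  have key : forall x y : P, lop x y = lop y x -> lop (f x) (f y) = lop (f y) (f x).
  { move=> x y Hxy.
    case: (lop_ldiv P y lunit) => y' [Hyy' _].
    have Hy'y := inv_sym P DP y y' Hyy'.
    have f1 : f lunit = lunit.
    { apply: (lcan Q (f lunit)). rewrite lop_x1.
      have H1 := Hf lunit lunit. rewrite lop_x1 in H1. by case: H1 => <-. }
    have Hbb' : lop (f y) (f y') = lunit.
    { have H2 := Hf y y'. rewrite Hyy' f1 in H2. case: H2 => E; first by rewrite -E.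
      apply: inv_sym; first exact: DQ. by rewrite -E. }
    have AP : forall u v w, gen2 P x y u -> gen2 P x y v -> gen2 P x y w ->
        lop (lop u v) w = lop u (lop v w) by move=> u v w; apply: DP.
    have Gy' : gen2 P x y y' by apply: (gen_inv P x y y) => //; auto with gen.
    have E1 : lop (lop x y) (lop x y') = lop x x.
    { rewrite AP; try solve [auto with gen].
      rewrite -(AP y x y'); try solve [auto with gen].
      rewrite -Hxy AP; try solve [auto with gen]. by rewrite Hyy' lop_x1. }
    have E2 : lop (lop x y') (lop y y) = lop x y.
    { rewrite AP; try solve [auto with gen].
      rewrite -(AP y' y y); try solve [auto with gen]. by rewrite Hy'y lop_1x. }
    have Fxx : f (lop x x) = lop (f x) (f x) by case: (Hf x x).
    have Fyy : f (lop y y) = lop (f y) (f y) by case: (Hf y y).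
    have R1 := Hf (lop x y) (lop x y'). rewrite E1 Fxx in R1.
    have R2 := Hf (lop x y') (lop y y). rewrite E2 Fyy in R2.
    have Hb'b := inv_sym Q DQ _ _ Hbb'.
    case: (Hf x y) => Fz; case: (Hf x y') => Fz';
      rewrite Fz Fz' in R1 R2;
      set a := f x in R1 R2 Fz Fz' *; set b := f y in R1 R2 Fz Fz' Hbb' Hb'b *;
      set b' := f y' in R1 R2 Fz Fz' Hbb' Hb'b *;
      have Ga : gen2 Q a b a := gen_x Q a b;
      have Gb : gen2 Q a b b := gen_y Q a b;
      have Gb' : gen2 Q a b b' := gen_inv Q a b b b' Gb Hbb';
      have A : forall u v w, gen2 Q a b u -> gen2 Q a b v -> gen2 Q a b w ->
        lop (lop u v) w = lop u (lop v w) := fun u v w => DQ a b u v w.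
    -
      case: R1 => R1.
      + move: R1. rewrite A; try solve [auto with gen]. move/lcan => R1.
        rewrite {1}R1 A; try solve [auto with gen].
        by rewrite A ?Hb'b ?lop_x1; try solve [auto with gen].
      + move: R1. rewrite A; try solve [auto with gen]. move/lcan => R1.
        rewrite {2}R1 -A; try solve [auto with gen]. by rewrite Hbb' lop_1x.
    -
      case: R2 => R2.
      + apply: (rcan Q b). rewrite (A b a b); try solve [auto with gen].
        rewrite {2}R2 -(A b (lop b' a) (lop b b)); try solve [auto with gen].
        rewrite -(A b b' a); try solve [auto with gen]. rewrite Hbb' lop_1x.
        by rewrite -A; try solve [auto with gen].
      + rewrite R2 A; try solve [auto with gen].
        rewrite -(A b b' a); try solve [auto with gen]. by rewrite Hbb' lop_1x.
    -
      case: R2 => R2.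
      + rewrite R2 A; try solve [auto with gen].
        rewrite -(A b' b b); try solve [auto with gen]. by rewrite Hb'b lop_1x.
      + apply: (lcan Q b). rewrite -(A b a b); try solve [auto with gen].
        rewrite {1}R2 (A (lop b b) (lop a b') b); try solve [auto with gen].
        rewrite (A a b' b); try solve [auto with gen]. rewrite Hb'b lop_x1.
        by rewrite A; try solve [auto with gen].
    -
      case: R1 => R1.
      + move: R1. rewrite -(A (lop b a) b' a); try solve [auto with gen].
        move/rcan => R1. rewrite {1}R1 A; try solve [auto with gen].
        by rewrite Hb'b lop_x1.
      + apply: (rcan Q a). rewrite (A b a a); try solve [auto with gen].
        rewrite R1 (A b' a (lop b a)); try solve [auto with gen].
        rewrite -(A b b'); try solve [auto with gen]. rewrite Hbb' lop_1x.
        by rewrite A; try solve [auto with gen]. }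
  move=> y; split.
  - move=> Cy. exists (g y); split; last by rewrite gf.
    move=> p. apply: (can_inj fg).
    have E : lop y (f p) = lop (f p) y by apply: Cy.
    case: (Hf (g y) p); case: (Hf p (g y)); rewrite gf => -> ->; by rewrite ?E.
  - move=> [x [Cx <-]] q. rewrite -(gf q). apply: key. apply: Cx.
Qed.
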